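(* Let $\mathcal{F}$ be a hypothesis class of functions $\mathcal{X}\to\{\pm1\}$ with finite VC dimension $d$, and $\mathcal{P}$ an unknown distribution on $\mathcal{X}\times\{\pm1\}$. Consider a run of Active-ILESS with budget $m$ and confidence $\delta$, and suppose the event $\mathcal{K}$ occurred. Then the final radius $\sigma_{\rm Active}$ (the value computed at the last update of the low-error set) satisfies $$\sigma_{\rm Active}=O\Big(\frac{B}{m}+\sqrt{\frac{B}{m}R(f^* )}\Big),\qquad B=16d\ln\frac{16m^2e}{d\delta},$$ where $R(f^* )$ is the minimal true risk over $\mathcal{F}$ under $\mathcal{P}$ and the $O$ hides a universal constant.
   Context: $R(f)=\Pr_{\mathcal{P}}[f(X)\ne Y]$; $\hat R(f,S)$ is the fraction of examples of $S$ misclassified by $f$; $f^*$ is any minimizer of $R$ over $\mathcal{F}$. Slacks: for $n>0$, $\delta'\in(0,1)$, $A=4d\ln\frac{16ne}{d\delta'}$, $\hat\sigma_{R-\hat R}(n,\delta',d,\hat r)=\frac{A}{n}+\sqrt{\frac{A}{n}\hat r}$, $\bar\sigma_{R-\hat R}(n,\delta',d,r)=\sqrt{\frac{A}{n}r}$, $\bar\sigma_{\hat R-R}(n,\delta',d,r)=\frac{A}{n}+\sqrt{\frac{A}{n}r}$, $\hat\sigma_{\hat R-R}(n,\delta',d,\hat r)=\sqrt{\frac{A}{n}\hat r}$, $\sigma_{R-\hat R}=\min\{\hat\sigma_{R-\hat R}(\cdot,\hat r),\bar\sigma_{R-\hat R}(\cdot,r)\}$, $\sigma_{\hat R-R}=\min\{\bar\sigma_{\hat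 R-R}(\cdot,r),\hat\sigma_{\hat R-R}(\cdot,\hat r)\}$. $AGR(G)=\{x:\text{all }f\in G\text{ agree on }x\}$. Active-ILESS (inputs: $\epsilon$ and/or budget $m$, confidence $\delta$, $\mathcal{F}$, $d$, i.i.d. stream $x_1,x_2,\dots$ from $\mathcal{P}$): initialize $\hat S=\emptyset$, $G_0=\mathcal{F}$, $t=1$; for each $x_t$: if $x_t\in AGR(G_{t-1})$ do not request its label and set $y_t=f(x_t)$ for any $f\in G_{t-1}$, otherwise request the true label $y_t$; add $(x_t,y_t)$ to $\hat S$; let $\hat f$ be an ERM on $\hat S$; if $\log_2t\in\mathbb{N}$: set $\sigma_{\rm Active}=\hat\sigma_{R-\hat R}(\tfrac t2,\tfrac\delta{2t},d,\hat R(\hat f,\hat S))+\bar\sigma_{\hat R-R}\big(\tfrac t2,\tfrac\delta{2t},d,\hat R(\hat f,\hat S)+\hat\sigma_{R-\hat R}(\tfrac t2,\tfrac\delta{2t},d,\hat R(\hat f,\hat S))\big)$, terminate returning $\hat f$ if $\epsilon$ was given and $\sigma_{\rm Active}<\epsilon$, set $G_t=\{f:\hat R(f,\hat S)\le\hat R(\hat f,\hat S)+\sigma_{\rm Active}\}$ and reset $\hat S=\emptyset$; otherwise $G_t=G_{t-1}$; if $m$ was given and $t=m$ terminate returning $\hat f$; increment $t$. For $G\subseteq\mathcal{F}$, $\mathcal{P}(G)$ is the distribution of $(X,Y')$ with $(X,Y)\sim\mathcal{P}$, $Y'$ = common value of $G$ at $X$ if $X\in AGR(G)$ and $Y'=Y$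 otherwise; $R_{\mathcal{P}(G)}(f)=\Pr[f(X)\ne Y']$. Event $\mathcal{K}$: for every $t=2^i$ reached and every $f\in\mathcal{F}$, with $\hat R(f)=\hat R(f,\hat S)$ for $\hat S$ at iteration $t$ before reset, $R_{\mathcal{P}(G_{t-1})}(f)\le\hat R(f)+\sigma_{R-\hat R}(\tfrac t2,\tfrac\delta{2t},d,R_{\mathcal{P}(G_{t-1})}(f),\hat R(f))$ and $\hat R(f)\le R_{\mathcal{P}(G_{t-1})}(f)+\sigma_{\hat R-R}(\tfrac t2,\tfrac\delta{2t},d,R_{\mathcal{P}(G_{t-1})}(f),\hat R(f))$. *)

(* Defs.v *)
From HB Require Import structures.
From mathcomp Require Import all_boot all_order all_algebra.
From mathcomp Require Import all_classical all_reals all_analysis.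

Set Implicit Arguments.
Unset Strict Implicit.
Unset Printing Implicit Defensive.

Import Order.TTheory GRing.Theory Num.Theory.
Local Open Scope classical_set_scope.
Local Open Scope ring_scope.

Section ActiveILESS.
Context {R : realType}.

Definition Aterm (n delta' : R) (d : nat) : R :=
  4 * d%:R * ln (16 * n * expR 1 / (d%:R * delta')).

Definition sighat_RmRh (n delta' : R) (d : nat) (rh : R) : R :=
  Aterm n delta' d / n + Num.sqrt (Aterm n delta' d / n * rh).
Definition sigbar_RmRh (n delta' : R) (d : nat) (r : R) : R :=
  Num.sqrt (Aterm n delta' d / n * r).
Definition sigbar_RhmR (n delta' : R) (d : nat) (r : R) : R :=
  Aterm n delta' d / n + Num.sqrt (Aterm n delta' d / n * r).
Definition sighat_RhmR (n delta' : R) (d : nat) (rh : R) : R :=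
  Num.sqrt (Aterm n delta' d / n * rh).

Definition sig_RmRh (n delta' : R) (d : nat) (r rh : R) : R :=
  Order.min (sighat_RmRh n delta' d rh) (sigbar_RmRh n delta' d r).
Definition sig_RhmR (n delta' : R) (d : nat) (r rh : R) : R :=
  Order.min (sigbar_RhmR n delta' d r) (sighat_RhmR n delta' d rh).

Variable X : Type.

(* labels {+1,-1} are encoded as bool *)
Definition emp_risk (f : X -> bool) (S : seq (X * bool)) : R :=
  (count (fun p => f p.1 != p.2) S)%:R / (size S)%:R.

Definition AGR (G : set (X -> bool)) : set X :=
  [set x | forall f g, G f -> G g -> f x = g x].

(* the label Y' of P(G): common value of G on AGR(G), true label otherwise *)
Definition agr_value (G : set (X -> bool)) (x : X) (y : bool) : bool :=
  xget y [set b | exists2 f, G f & f x = b].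
Definition label_of (G : set (X -> bool)) (x : X) (y : bool) : bool :=
  if pselect (AGR G x) then agr_value G x y else y.

Definition shatters (F : set (X -> bool)) (n : nat) (p : 'I_n -> X) : Prop :=
  forall lab : 'I_n -> bool, exists2 f, F f & forall i, f (p i) = lab i.

Definition VC_dim (F : set (X -> bool)) (d : nat) : Prop :=
  (exists p : 'I_d -> X, injective p /\ shatters F p) /\
  ~ (exists p : 'I_d.+1 -> X, injective p /\ shatters F p).

(* state after iteration t: (G_t, current sample S-hat, last sigma_Active, f-hat) *)
Record state := State {
  st_G : set (X -> bool);
  st_S : seq (X * bool);
  st_sigma : R;
  st_fhat : X -> bool }.

Definition is_pow2 (t : nat) : bool := [exists i : 'I_t.+1, t == (2 ^ i)%N].

Variables (F : set (X -> bool)) (d : nat) (delta : R)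
  (erm : nat -> seq (X * bool) -> (X -> bool))
  (xs : nat -> X) (ys : nat -> bool).
(* xs t, ys t : the t-th stream point (t >= 1) and its true label;
   erm t S : the ERM chosen at iteration t on sample S *)

(* the sample S-hat at iteration t, after adding (x_t, y_t), before reset *)
Definition sample_at (st : state) (t : nat) : seq (X * bool) :=
  rcons (st_S st) (xs t, label_of (st_G st) (xs t) (ys t)).

Definition sigma_update (t : nat) (rh : R) : R :=
  let n := t%:R / 2 in
  let dl := delta / (2 * t%:R) in
  sighat_RmRh n dl d rh + sigbar_RhmR n dl d (rh + sighat_RmRh n dl d rh).

Definition step (st : state) (t : nat) : state :=
  let S := sample_at st t in
  let fh := erm t S in
  if is_pow2 t then
    let rh := emp_risk fh S in
    let s := sigma_update t rh in
    State [set f | F f /\ emp_risk f S <= rh + s] [::] s fh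
  else State (st_G st) S (st_sigma st) fh.

Fixpoint run (t : nat) : state :=
  match t with
  | 0 => State F [::] 0 (fun _ => true)
  | t'.+1 => step (run t') t'.+1
  end.

Definition G_prev (t : nat) : set (X -> bool) := st_G (run t.-1).
Definition Shat_at (t : nat) : seq (X * bool) := sample_at (run t.-1) t.

End ActiveILESS.

Section Risks.
Context {R : realType} {dX : measure_display} {X : measurableType dX}.
Variable P : probability (X * bool)%type R.

Definition risk (f : X -> bool) : R :=
  fine (P [set p | f p.1 != p.2]).

Definition risk_PG (G : set (X -> bool)) (f : X -> bool) : R :=
  fine (P [set p | f p.1 != label_of G p.1 p.2]).
End Risks.

Definition event_K {R : realType} {dX : measure_display} {X : measurableType dX}
  (P : probability (X * bool)%type R) (F : set (X -> bool)) (d : nat) (delta : R)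
  (erm : nat -> seq (X * bool) -> (X -> bool)) (xs : nat -> X) (ys : nat -> bool)
  (m : nat) : Prop :=
  forall t : nat, (1 <= t <= m)%N -> is_pow2 t ->
  forall f, F f ->
    let G := G_prev F d delta erm xs ys t in
    let S := Shat_at F d delta erm xs ys t in
    let n := t%:R / 2 in
    let dl := delta / (2 * t%:R) in
    risk_PG P G f <= emp_risk f S + sig_RmRh n dl d (risk_PG P G f) (emp_risk f S) /\
    emp_risk f S <= risk_PG P G f + sig_RhmR n dl d (risk_PG P G f) (emp_risk f S).

(* Main.v *)
Require Import Defs.
From HB Require Import structures.
From mathcomp Require Import all_boot all_order all_algebra.
From mathcomp Require Import all_classical all_reals all_analysis.
From mathcomp Require Import ring lra.

Import Order.TTheory GRing.Theory Num.Theory.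
Local Open Scope classical_set_scope.
Local Open Scope ring_scope.
Set Implicit Arguments.
Unset Strict Implicit.

Section Meas.
Context {R : realType} {dX : measure_display} {X : measurableType dX}.
Variable P : probability (X * bool)%type R.

Definition mu (A : set (X * bool)) : R := fine (P A).

Lemma mu_ge0 A : 0 <= mu A.
Proof. by apply: fine_ge0; apply: measure_ge0. Qed.

Lemma mu_fin A : measurable A -> P A \is a fin_num.
Proof. by move=> mA; apply: fin_num_measure. Qed.

Lemma mu_le A B : measurable A -> measurable B -> A `<=` B -> mu A <= mu B.
Proof.
move=> mA mB AB; apply: fine_le; try exact: mu_fin.
by apply: le_measure => //; rewrite inE.
Qed.

Lemma mu_U A B : measurable A -> measurable B -> mu (A `|` B) <= mu A + mu B.
Proof.
move=> mA mB; rewrite /mu -fineD; try exact: mu_fin.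
apply: fine_le.
- by apply: mu_fin; apply: measurableU.
- by rewrite fin_numD !mu_fin.
- exact: measureU2.
Qed.

Lemma mu_D A B : measurable A -> measurable B -> A `&` B = set0 ->
  mu (A `|` B) = mu A + mu B.
Proof.
move=> mA mB AB0; rewrite /mu measureU // fineD //; exact: mu_fin.
Qed.

Lemma meas_split (Q : X -> bool -> Prop) :
  measurable [set x | Q x true] -> measurable [set x | Q x false] ->
  measurable [set p : X * bool | Q p.1 p.2].
Proof.
move=> m1 m2.
have -> : [set p : X * bool | Q p.1 p.2] =
  ([set x | Q x true] `*` [set true]) `|` ([set x | Q x false] `*` [set false]).
  apply/seteqP; split => -[x b] /=.
    by case: b => H; [left|right].
  by case=> -[] /= H ->.
by apply: measurableU; apply: measurableX.
Qed.

Lemma mpre (f : X -> bool) (B : set bool) : measurable_fun setT f ->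
  measurable (f @^-1` B).
Proof. by move=> mf; have := mf measurableT B I; rewrite setTI. Qed.

Lemma mneq (f g : X -> bool) : measurable_fun setT f -> measurable_fun setT g ->
  measurable [set x | f x != g x].
Proof.
move=> mf mg.
have -> : [set x | f x != g x] =
  (f @^-1` [set true] `&` g @^-1` [set false]) `|`
  (f @^-1` [set false] `&` g @^-1` [set true]).
  apply/seteqP; split => x /=.
    by case: (f x); case: (g x) => //= _; [left|right].
  by case=> -[-> ->].
by apply: measurableU; apply: measurableI; apply: mpre.
Qed.

Lemma mneqc (f : X -> bool) b : measurable_fun setT f ->
  measurable [set x | f x != b].
Proof.
move=> mf; have -> : [set x | f x != b] = f @^-1` [set ~~ b].
  by apply/seteqP; split => x /=; case: (f x); case: b.
exact: mpre.
Qed.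

Lemma label_AGR (G : set (X -> bool)) fs x y : G fs -> AGR G x ->
  label_of G x y = fs x.
Proof.
move=> Gfs Ax; rewrite /label_of; destruct (pselect (AGR G x)) as [a|] => //.
rewrite /agr_value.
have [g Gg gx] : exists2 g, G g & g x = xget y [set b | exists2 f, G f & f x = b].
  apply: (@xgetPex _ y [set b | exists2 f, G f & f x = b]).
  by exists (fs x); exists fs.
by rewrite -gx; apply: Ax.
Qed.

Lemma label_nAGR (G : set (X -> bool)) x y : ~ AGR G x -> label_of G x y = y.
Proof. by move=> nA; rewrite /label_of; destruct (pselect (AGR G x)). Qed.

Lemma mEl (G : set (X -> bool)) fs f : G fs -> measurable (AGR G) ->
  measurable_fun setT f -> measurable_fun setT fs ->
  measurable [set p : X * bool | f p.1 != label_of G p.1 p.2].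
Proof.
move=> Gfs mA mf mfs.
have E b : [set x | f x != label_of G x b] =
   (AGR G `&` [set x | f x != fs x]) `|` (~` AGR G `&` [set x | f x != b]).
  apply/seteqP; split => x /=.
    case: (pselect (AGR G x)) => A.
      by rewrite (@label_AGR G fs x b Gfs A) => H; left.
    by rewrite (@label_nAGR G x b A) => H; right.
  case=> -[A H].
    by rewrite (@label_AGR G fs x b Gfs A).
  by rewrite (@label_nAGR G x b A).
apply: (@meas_split (fun x b => f x != label_of G x b)); rewrite E;
  apply: measurableU; apply: measurableI => //;
  first [exact: mneq | exact: mneqc | by apply: measurableC].

Qed.


Lemma mEy f : measurable_fun setT f -> measurable [set p : X * bool | f p.1 != p.2].
Proof.
move=> mf; apply: (@meas_split (fun x b => f x != b)); exact: mneqc.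
Qed.

Lemma mAG (G : set (X -> bool)) : measurable (AGR G) ->
  measurable [set p : X * bool | AGR G p.1].
Proof. by move=> mA; apply: (@meas_split (fun x b => AGR G x)). Qed.

Lemma risk_PG_le G fs : G fs -> measurable (AGR G) -> measurable_fun setT fs ->
  risk_PG P G fs <= risk P fs.
Proof.
move=> Gfs mA mfs; rewrite /risk_PG /risk; apply: mu_le.
exact: (mEl Gfs mA mfs mfs). exact: (mEy mfs).
move=> [x y] /=; case: (pselect (AGR G x)) => A.
  by rewrite (@label_AGR G fs x y Gfs A) eqxx.
by rewrite (@label_nAGR G x y A).
Qed.

Lemma risk_PG_min G fs f : G fs -> measurable (AGR G) ->
  measurable_fun setT fs -> measurable_fun setT f ->
  risk P fs <= risk P f -> risk_PG P G fs <= risk_PG P G f.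
Proof.
move=> Gfs mA mfs mf Hr.
set AG := [set p : X * bool | AGR G p.1].
have mAG' : measurable AG by exact: mAG.
have mnAG : measurable (~` AG) by exact: measurableC.
have mEys := mEy mfs.
have mEyf := mEy mf.
have mEls := mEl Gfs mA mfs mfs.
have mElf := mEl Gfs mA mf mfs.
have h1 : risk_PG P G fs <= mu (~` AG `&` [set p | fs p.1 != p.2]).
  apply: mu_le => //; first exact: measurableI.
  move=> [x y] /=; case: (pselect (AGR G x)) => A.
    by rewrite (@label_AGR G fs x y Gfs A) eqxx.
  by rewrite (@label_nAGR G x y A).
have h2 : mu (~` AG `&` [set p | fs p.1 != p.2]) + mu (AG `&` [set p | fs p.1 != p.2])
   <= risk P fs.
  rewrite -mu_D; [|exact: measurableI|exact: measurableI|].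
    apply: mu_le => //; first by apply: measurableU; exact: measurableI.
    by move=> p [] [].
  by apply/seteqP; split => p // [[A _] [B _]].
have h3 : risk P f <= risk_PG P G f + mu (AG `&` [set p | fs p.1 != p.2]).
  apply: le_trans (mu_U _ _) => //; last exact: measurableI.
  apply: mu_le => //; first by apply: measurableU => //; exact: measurableI.
  move=> [x y] /= H; case: (pselect (AGR G x)) => A.
    rewrite (@label_AGR G fs x y Gfs A).
    case E: (f x == fs x); last by left.
    by right; split => //; rewrite -(eqP E).
  by left; rewrite (@label_nAGR G x y A).
lra.
Qed.

End Meas.

Section Alg.
Context {R : realType}.

Lemma sqrt_le_of (x y : R) : 0 <= y -> x <= y ^+ 2 -> Num.sqrt x <= y.
Proof.
move=> y0 xy.
have : Num.sqrt x <= Num.sqrt (y ^+ 2) by rewrite ler_sqrt // sqr_ge0.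
by rewrite sqrtr_sqr ger0_norm.
Qed.

Lemma final_alg (a b q rh u : R) : 0 <= a -> a <= b -> 0 <= q -> 0 <= rh ->
  0 <= u -> u ^+ 2 = b * q ->
  rh <= q + b + u ->
  a + Num.sqrt (a * rh) + (a + Num.sqrt (a * (rh + (a + Num.sqrt (a * rh)))))
  <= 6 * (b + u).
Proof.
move=> a0 ab q0 rh0 u0 uu hrh.
have b0 : 0 <= b by lra.
have s1 : Num.sqrt (a * rh) <= 2 * (u + b).
  apply: sqrt_le_of; first lra.
  have : a * rh <= b * rh by apply: ler_wpM2r.
  have : b * rh <= b * (q + b + u) by apply: ler_wpM2l.
  nra.
have s1' : 0 <= Num.sqrt (a * rh) by exact: sqrtr_ge0.
have s2 : Num.sqrt (a * (rh + (a + Num.sqrt (a * rh)))) <= 2 * (u + b).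
  apply: sqrt_le_of; first lra.
  have h : rh + (a + Num.sqrt (a * rh)) <= q + 4 * b + 3 * u by lra.
  have : a * (rh + (a + Num.sqrt (a * rh))) <= b * (rh + (a + Num.sqrt (a * rh))).
    by apply: ler_wpM2r => //; lra.
  have : b * (rh + (a + Num.sqrt (a * rh))) <= b * (q + 4 * b + 3 * u).
    by apply: ler_wpM2l.
  nra.
lra.
Qed.
End Alg.

Lemma a_le_b {R : realType} (d t m : nat) (delta : R) : (0 < d)%N -> (1 <= t <= m)%N ->
  (m < 2 * t)%N -> 0 < delta ->
  0 <= Aterm (t%:R / 2) (delta / (2 * t%:R)) d / (t%:R / 2) ->
  Aterm (t%:R / 2) (delta / (2 * t%:R)) d / (t%:R / 2) <=
  16 * d%:R * ln (16 * m%:R ^+ 2 * expR 1 / (d%:R * delta)) / m%:R.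
Proof.
move=> d0 /andP[t1 tm] mt dpos ha.
have tpos : 0 < t%:R :> R by rewrite ltr0n.
have mpos : 0 < m%:R :> R by rewrite ltr0n (leq_trans t1 tm).
have Dpos : 0 < d%:R :> R by rewrite ltr0n.
have tmR : t%:R <= m%:R :> R by rewrite ler_nat.
have mtR : m%:R <= 2 * t%:R :> R.
  by rewrite -natrM ler_nat ltnW.
have e0 : 0 < expR 1 :> R by exact: expR_gt0.
have E : 16 * (t%:R / 2) * expR 1 / (d%:R * (delta / (2 * t%:R))) =
         16 * t%:R ^+ 2 * expR 1 / (d%:R * delta).
  by field; rewrite !gt_eqF // ?mulr_gt0.
move: ha; rewrite /Aterm E => ha.
set Lt := ln _ in ha *.
set Lm := ln _.
have Ltm : Lt <= Lm.
  rewrite /Lt /Lm ler_ln ?posrE; last first.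
  - by rewrite !mulr_gt0 // ?invr_gt0 ?mulr_gt0 // exprn_gt0.
  - by rewrite !mulr_gt0 // ?invr_gt0 ?mulr_gt0 // exprn_gt0.
  apply: ler_wpM2r; first by rewrite invr_ge0 mulr_ge0 // ltW.
  apply: ler_wpM2r; first exact: ltW.
  apply: ler_wpM2l => //; nra.
have Lt0 : 0 <= Lt.
  move: ha; rewrite pmulr_lge0 ?invr_gt0 ?divr_gt0 //.
  by rewrite pmulr_rge0 // mulr_gt0.
rewrite ler_pdivrMr ?divr_gt0 //.
have -> : 16 * d%:R * Lm / m%:R * (t%:R / 2) = 8 * d%:R * Lm * t%:R / m%:R.
  by field; rewrite gt_eqF.
rewrite ler_pdivlMr //.
have h1 : d%:R * Lt <= d%:R * Lm by apply: ler_wpM2l => //; exact: ltW.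
have h2 : 0 <= d%:R * Lt by apply: mulr_ge0 => //; exact: ltW.
nra.
Qed.

Lemma min_le_l {R : realType} (x y : R) : Order.min x y <= x.
Proof. by rewrite ge_min lexx. Qed.

Lemma emp_ge0 {R : realType} {X : Type} (f : X -> bool) S : 0 <= emp_risk (R:=R) f S.
Proof. by rewrite /emp_risk divr_ge0. Qed.

Lemma is_pow2E t : is_pow2 t -> exists i, t = (2 ^ i)%N.
Proof. by move/existsP => [i /eqP ->]; exists i. Qed.

Lemma pow2_double i : is_pow2 (2 * 2 ^ i)%N.
Proof.
apply/existsP.
have Hi : (i.+1 < (2 * 2 ^ i).+1)%N.
  by rewrite ltnS -expnS ltnW // ltn_expl.
by exists (Ordinal Hi); rewrite /= expnS.
Qed.

Section Main.
Context {R : realType} {dX : measure_display} {X : measurableType dX}.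
Variables (P : probability (X * bool)%type R) (F : set (X -> bool)) (d : nat)
  (delta : R) (erm : nat -> seq (X * bool) -> (X -> bool))
  (xs : nat -> X) (ys : nat -> bool) (m : nat) (fstar : X -> bool).

Local Notation runF := (run F d delta erm xs ys).

Lemma G_sub t : st_G (runF t) `<=` F.
Proof.
elim: t => [|t IH] //=; rewrite /step; case: ifP => _ /=; last exact: IH.
by move=> f [].
Qed.

Lemma last_pow2 k : (0 < k)%N -> exists t, [/\ (1 <= t <= k)%N, is_pow2 t, (k < 2 * t)%N &
  st_sigma (runF k) = sigma_update d delta t
     (emp_risk (erm t (Shat_at F d delta erm xs ys t)) (Shat_at F d delta erm xs ys t))].
Proof.
elim: k => [//|k IH] _.
rewrite [runF k.+1]/= /step; case: ifP => Hp /=.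
  exists k.+1; split => //; first by rewrite leqnn.
  by rewrite ltn_Pmull.
case: k IH Hp => [|k] IH Hp.
  by exfalso; move: Hp; have -> : is_pow2 1 by apply/existsP; exists ord0.
have [t [/andP[t1 tk] Ht kt ->]] := IH isT.
exists t; split => //.
- by rewrite t1 /= ltnW.
- rewrite ltn_neqAle kt andbT; apply/negP => /eqP E.
  have [i ti] := is_pow2E Ht.
  by move: Hp; rewrite E ti pow2_double.
Qed.


Hypothesis HmF : forall f, F f -> measurable_fun setT f.
Hypothesis HA : forall G, G `<=` F -> measurable (AGR G).
Hypothesis Herm : forall (t : nat) (S : seq (X * bool)), F (erm t S) /\ (forall f, F f -> emp_risk (R:=R) (erm t S) S <= emp_risk f S).
Hypothesis HFs : F fstar.
Hypothesis Hmin : forall f, F f -> risk P fstar <= risk P f.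
Hypothesis HK : event_K P F d delta erm xs ys m.

Lemma core t : (1 <= t <= m)%N -> is_pow2 t -> G_prev F d delta erm xs ys t fstar ->
  let S := Shat_at F d delta erm xs ys t in
  let rh := emp_risk (erm t S) S in
  let a := Aterm (t%:R / 2) (delta / (2 * t%:R)) d / (t%:R / 2) in
  [/\ 0 <= a, emp_risk fstar S <= rh + sigma_update d delta t rh &
      rh <= risk P fstar + a + Num.sqrt (a * risk P fstar)].
Proof.
move=> Ht Hp Gs S rh a.
set G := G_prev F d delta erm xs ys t.
have GF : G `<=` F by exact: G_sub.
have mA := HA GF.
have [Ffh Hfh] := Herm t S.
have [k1 k2] := HK Ht Hp HFs.
have [k3 _] := HK Ht Hp Ffh.
rewrite -/G -/S in k1 k2 k3.
move: k1 k2 k3; rewrite /sig_RmRh /sig_RhmR /sighat_RmRh /sigbar_RmRh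
  /sigbar_RhmR /sighat_RhmR -/a -/rh => k1 k2 k3.
set r := risk_PG P G fstar in k1 k2.
set e := emp_risk fstar S in k1 k2 *.
set rf := risk_PG P G (erm t S) in k3.
set q := risk P fstar.
have r0 : 0 <= r by exact: mu_ge0.
have e0 : 0 <= e by exact: emp_ge0.
have rh0 : 0 <= rh by exact: emp_ge0.
have a0 : 0 <= a.
  rewrite leNgt; apply/negP => an.
  have z1 : Num.sqrt (a * e) = 0 by apply: ler0_sqrtr; nra.
  have z2 : Num.sqrt (a * r) = 0 by apply: ler0_sqrtr; nra.
  have := le_trans k1 (lerD (lexx _) (min_le_l _ _)).
  have := le_trans k2 (lerD (lexx _) (min_le_l _ _)).
  rewrite z1 z2; lra.
have k1' := le_trans k2 (lerD (lexx _) (min_le_l _ _)).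
have k3' := le_trans k3 (lerD (lexx _) (min_le_l _ _)).
have rrf : r <= rf.
  apply: risk_PG_min => //; [exact: HmF | exact: HmF | exact: Hmin].
have rq : r <= q by apply: risk_PG_le => //; exact: HmF.
split => //.
- rewrite /sigma_update /sighat_RmRh /sigbar_RhmR -/a.
  have : Num.sqrt (a * r) <= Num.sqrt (a * (rh + (a + Num.sqrt (a * rh)))).
    rewrite ler_sqrt; last by apply: mulr_ge0 => //; have := sqrtr_ge0 (a * rh); lra.
    by apply: ler_wpM2l => //; lra.
  lra.
- have : Num.sqrt (a * r) <= Num.sqrt (a * q).
    rewrite ler_sqrt; last by apply: mulr_ge0 => //; lra.
    by apply: ler_wpM2l.
  have := Hfh fstar HFs; rewrite -/S -/rh -/e.
  lra.
Qed.


Lemma inv t : (t <= m)%N -> st_G (runF t) fstar.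
Proof.
elim: t => [|t IH] Ht /=; first exact: HFs.
rewrite /step; case: ifP => Hp /=; last exact: IH (ltnW Ht).
split => //.
have Ht' : (1 <= t.+1 <= m)%N by rewrite Ht.
have [_ H _] := core Ht' Hp (IH (ltnW Ht)).
exact: H.
Qed.

End Main.

Unset Implicit Arguments.
Set Strict Implicit.

Theorem lemma13 (R : realType) :
  exists C : R, 0 < C /\
  forall (dX : measure_display) (X : measurableType dX)
    (F : set (X -> bool)) (d : nat)
    (P : probability (X * bool)%type R)
    (m : nat) (delta : R)
    (erm : nat -> seq (X * bool) -> (X -> bool))
    (xs : nat -> X) (ys : nat -> bool) (fstar : X -> bool),
    (* F has (finite) VC dimension d *)
    VC_dim F d -> (0 < d)%N ->
    (* measurability of the hypotheses and of the agreement regions *)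
    (forall f, F f -> measurable_fun setT f) ->
    (forall G, G `<=` F -> measurable (AGR G)) ->
    (* budget and confidence *)
    (0 < m)%N -> 0 < delta < 1 ->
    (* erm t S is an empirical risk minimizer over F on S *)
    (forall t S, F (erm t S) /\
       forall f, F f -> emp_risk (R:=R) (erm t S) S <= emp_risk f S) ->
    (* f* minimizes the true risk over F *)
    F fstar -> (forall f, F f -> risk P fstar <= risk P f) ->
    (* the event K occurred *)
    event_K P F d delta erm xs ys m ->
    let B := 16 * d%:R * ln (16 * (m%:R) ^+ 2 * expR 1 / (d%:R * delta)) in
    st_sigma (run F d delta erm xs ys m)
      <= C * (B / m%:R + Num.sqrt (B / m%:R * risk P fstar)).
Proof.
exists 6; split => //.
move=> dX X F d P m delta erm xs ys fstar _ Hd HmF HA Hm /andP[Hdel _] Herm HFs Hmin HK.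
pose B := 16 * d%:R * ln (16 * (m%:R) ^+ 2 * expR 1 / (d%:R * delta)).
change (st_sigma (run F d delta erm xs ys m)
      <= 6 * (B / m%:R + Num.sqrt (B / m%:R * risk P fstar))).
have [t [Ht Hp mt ->]] := last_pow2 F d delta erm xs ys Hm.
have Gs : G_prev F d delta erm xs ys t fstar.
  apply: (inv HmF HA Herm HFs Hmin HK).
  by case/andP: Ht => t1 tm; rewrite (leq_trans (leq_pred t) tm).
have [a0 _ hrh] := core HmF HA Herm HFs Hmin HK Ht Hp Gs.
have ab := @a_le_b R d t m delta Hd Ht mt Hdel a0.
rewrite -/B in ab.
move: a0 ab hrh.
rewrite /sigma_update /sighat_RmRh /sigbar_RhmR.
set a := Aterm _ _ _ / _.
set rh := emp_risk _ _.
set q := risk P fstar.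
move=> a0 ab hrh.
have q0 : 0 <= q by exact: mu_ge0.
have rh0 : 0 <= rh by exact: emp_ge0.
have b0 : 0 <= B / m%:R by lra.
apply: (@final_alg R a (B / m%:R) q rh) => //.
- by rewrite sqr_sqrtr // mulr_ge0.
- have : Num.sqrt (a * q) <= Num.sqrt (B / m%:R * q).
    rewrite ler_sqrt; first exact: ler_wpM2r.
    exact: mulr_ge0.
  lra.
Qed.
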